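(* Consider one-sided matching with $n$ agents, $n$ items and unit-sum valuations. The best possible distortion of a deterministic ordinal matching algorithm is $\Theta(n^2)$. More precisely: (i) every ordinal algorithm whose output matches at least one agent to her top-ranked item has distortion at most $n^2$; (ii) every deterministic ordinal algorithm has distortion $\Omega(n^2)$.
   Context: One-sided matching: there is a set $N$ of $n$ agents and a set $A$ of $n$ items. Each agent $i$ has a valuation function $v_i:A\to\mathbb{R}_{\ge 0}$. Valuations are unit-sum if $\sum_{j\in A}v_i(j)=1$ for every agent $i$. A profile $\mathbf v=(v_i)_{i\in N}$ induces an ordinal profile $\succ_{\mathbf v}=(\succ_i)_{i\in N}$, where each $\succ_i$ is a strict ranking of $A$ consistent with $v_i$ (if $a\succ_i b$ then $v_i(a)\ge v_i(b)$). A matching $Y=(y_i)_{i\in N}$ is a bijection from $N$ to $A$. Its social welfare is $\mathrm{SW}(Y\mid\mathbf v)=\sum_{i\in N}v_i(y_i)$. $X(\mathbf v)$ denotes a matching of maximum social welfare. A deterministic matching algorithm making $k$ queries per agent receives $\succ_{\mathbf v}$ as input. It may adaptively make value queries, where a query $(i,j)$ returns $v_i(j)$, with at most $k$ queries per agent. It outputs a matching $\mathcal A(\succ_{\mathbf v})$. An ordinal algorithm is one with $k=0$. The distortion of an algorithm over a class of valuations is $\sup_{\mathbf v}\mathrm{SW}(X(\mathbf v)\mid\mathbf v)/\mathrm{SW}(\mathcal A(\succ_{\mathbf v})\mid\mathbf v)$, where the supremum is over all profiles in the class. *)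

(* Defs.v *)
From mathcomp Require Import all_boot all_order all_algebra all_fingroup.
Set Implicit Arguments. Unset Strict Implicit. Unset Printing Implicit Defensive.
Import Order.TTheory GRing.Theory Num.Theory.
Local Open Scope ring_scope.

(* Agents and items are both 'I_n.
   A valuation profile: v i j = v_i(j). *)
Definition valuation (R : realFieldType) (n : nat) := 'I_n -> 'I_n -> R.

Definition unit_sum (R : realFieldType) (n : nat) (v : valuation R n) : Prop :=
  (forall i j, 0 <= v i j) /\ (forall i, \sum_(j < n) v i j = 1).

(* A strict ranking of the items is a bijection  item -> rank position
   (rank 0 = top). An ordinal profile gives one ranking per agent. *)
Definition ranking (n : nat) := {perm 'I_n}.
Definition ordinal_profile (n : nat) := {ffun 'I_n -> ranking n}.

Definition consistent (R : realFieldType) (n : nat) (v : valuation R n)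
  (p : ordinal_profile n) : Prop :=
  forall i a b : 'I_n, (p i a < p i b)%N -> v i b <= v i a.

Definition matching (n : nat) := {perm 'I_n}.

Definition SW (R : realFieldType) (n : nat) (Y : matching n) (v : valuation R n) : R :=
  \sum_(i < n) v i (Y i).

Definition opt_SW (R : realFieldType) (n : nat) (v : valuation R n) : R :=
  \big[Num.max/0]_(Y : matching n) SW Y v.

Definition ordinal_algorithm (n : nat) := ordinal_profile n -> matching n.

Definition distortion_le (R : realFieldType) (n : nat) (A : ordinal_algorithm n)
  (D : R) : Prop :=
  forall (v : valuation R n) (p : ordinal_profile n),
    unit_sum v -> consistent v p -> opt_SW v <= D * SW (A p) v.

Definition matches_some_top (n : nat) (A : ordinal_algorithm n) : Prop :=
  forall p : ordinal_profile n, exists i : 'I_n, (p i (A p i) = 0 :> nat).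

(* Main.v *)
Require Import Defs.
From mathcomp Require Import all_boot all_order all_algebra all_fingroup.
From mathcomp Require Import zify ring lra.
Import Order.TTheory GRing.Theory Num.Theory.
Set Implicit Arguments. Unset Strict Implicit.
Local Open Scope ring_scope.

Lemma opt_ge (R : realFieldType) n (v : valuation R n) (Z : matching n) :
  SW Z v <= opt_SW v.
Proof. rewrite /opt_SW; exact: (le_bigmax (0:R) (fun Y => SW Y v) Z). Qed.

Lemma val_le1 (R : realFieldType) n (v : valuation R n) :
  unit_sum v -> forall i j, v i j <= 1.
Proof.
move=> [v0 v1] i j; rewrite -(v1 i) (bigD1 j) //= lerDl.
by apply: sumr_ge0 => k _.
Qed.

Lemma opt_le_n (R : realFieldType) n (v : valuation R n) :
  unit_sum v -> opt_SW v <= n%:R.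
Proof.
move=> hv; rewrite /opt_SW; apply: bigmax_le => //= Y _.
have -> : (n%:R : R) = \sum_(b < n) (1:R) by rewrite sumr_const card_ord.
rewrite /SW.
by apply: ler_sum => i _; apply: val_le1.
Qed.

Lemma part1 (R : realFieldType) (n : nat) (A : ordinal_algorithm n) :
  matches_some_top A -> distortion_le A ((n ^ 2)%N%:R : R).
Proof.
move=> hA v p hv hc; have [i0 h0] := hA p.
have [v0 v1] := hv.
set a := A p i0.
have hb : forall b, v i0 b <= v i0 a.
  move=> b; case: (eqVneq b a) => [->//|nb].
  apply: hc; rewrite h0 lt0n; apply/eqP => e.
  by move/eqP: nb; apply; apply: (perm_inj (s:=p i0)); apply: val_inj; rewrite /= e h0.
have h1 : 1 <= n%:R * v i0 a.
  have -> : (n%:R * v i0 a) = \sum_(b<n) v i0 a by rewrite sumr_const card_ord mulr_natl.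
  by rewrite -(v1 i0); apply: ler_sum => b _; apply: hb.
have hs : v i0 a <= SW (A p) v.
  rewrite /SW (bigD1 i0) //= lerDl; by apply: sumr_ge0.
apply: (le_trans (opt_le_n hv)).
have hn : (0:R) <= n%:R by [].
rewrite natrX expr2 -mulrA.
apply: (le_trans _ (ler_wpM2l hn (ler_wpM2l hn hs))).
by rewrite -[X in X <= _]mulr1 ler_wpM2l.
Qed.

Section P2.
Variable m : nat.
Local Notation n := m.+2.

Definition one : 'I_n := inord 1.
Definition s_nat (i : nat) : nat := if (i <= m.+1 - i)%N then i else (m.+1 - i)%N.
Definition h_nat (i : nat) : nat := if (0 < s_nat i)%N then s_nat i else 1%N.
Definition hh (i : 'I_n) : 'I_n := inord (h_nat i).
Definition prof : ordinal_profile n := [ffun i => tperm one (hh i)].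
Definition revp : matching n := perm (@rev_ord_inj n).

Lemma one_val : (one : nat) = 1%N.
Proof. by rewrite /one inordK. Qed.

Lemma hh_val i : (hh i : nat) = h_nat i.
Proof.
rewrite /hh inordK // /h_nat /s_nat.
have := ltn_ord i; case: ifP; case: ifP => //= *; lia.
Qed.

Lemma hh_pos i : (0 < hh i)%N.
Proof. rewrite hh_val /h_nat; case: ifP => //. Qed.

Lemma prof_val i j : (prof i j : nat) =
  if j == one then hh i else if j == hh i then one else j.
Proof. by rewrite /prof ffunE permE /=; case: ifP => //; case: ifP. Qed.

Lemma prof0 i j : ((prof i j : nat) == 0%N) = (j == ord0).
Proof.
rewrite prof_val; have h1 := hh_pos i; have h2 := one_val.
case: (eqVneq j one) => [e |nj1].
  rewrite e -val_eqE /= h2; case: eqP => ?; case: eqP => ? //; exfalso; lia.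
case: (eqVneq j (hh i)) => [e |nj2].
  rewrite e -!val_eqE /= h2; case: eqP => ?; case: eqP => ? //; exfalso; lia.
by rewrite -val_eqE.
Qed.

Lemma prof_hh i : (prof i (hh i) : nat) = 1%N.
Proof.
rewrite prof_val eqxx; case: (eqVneq (hh i) one) => [e|_]; last exact: one_val.
by rewrite e one_val.
Qed.

Lemma prof_le1 i j : (prof i j <= 1)%N -> j = ord0 \/ j = hh i.
Proof.
rewrite prof_val; have h1 := hh_pos i; have h2 := one_val.
case: (eqVneq j one) => [e |nj1].
  move=> hle; right; apply/val_inj => /=; rewrite e h2. lia.
case: (eqVneq j (hh i)) => [-> |nj2]; first by right.
move=> hle; left; apply/val_inj => /=.
have : (j : nat) != 1%N by rewrite -h2 val_eqE.
lia.
Qed.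

Variable R : realFieldType.

Definition vY (Y : matching n) : valuation R n := fun i j =>
  if Y i == ord0 then n%:R^-1 else if Y i == hh i then (j == ord0)%:R
  else ((j == ord0) || (j == hh i))%:R / 2.

Lemma hh_neq0 i : (hh i == ord0) = false.
Proof. by apply/negbTE; rewrite -val_eqE /= -lt0n hh_pos. Qed.

Lemma sum_ind (a : 'I_n) : \sum_(j < n) ((j == a)%:R : R) = 1.
Proof.
rewrite (bigD1 a) //= eqxx big1 ?addr0 // => j /negbTE -> //.
Qed.

Lemma sum_ind2 (a b : 'I_n) : a != b ->
  \sum_(j < n) (((j == a) || (j == b))%:R / 2 : R) = 1.
Proof.
move=> nab; rewrite (bigD1 a) //= (bigD1 b) /=; last by rewrite eq_sym.
rewrite !eqxx orbT big1 ?addr0.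
  by rewrite /=; field.
by move=> j /andP [/negbTE -> /negbTE ->]; rewrite mul0r.
Qed.

Lemma vY_unit Y : unit_sum (vY Y).
Proof.
split.
  move=> i j; rewrite /vY; case: ifP => _; first by rewrite invr_ge0.
  by case: ifP => _ //; rewrite divr_ge0.
move=> i; rewrite /vY; case: (eqVneq (Y i) ord0) => e1.
  by rewrite sumr_const card_ord -[X in X = 1]mulr_natr mulVf // pnatr_eq0.
case: (eqVneq (Y i) (hh i)) => e2; first exact: sum_ind.
by apply: sum_ind2; rewrite eq_sym hh_neq0.
Qed.

Lemma vY_cons Y : consistent (vY Y) prof.
Proof.
move=> i a b hab; rewrite /vY; case: ifP => _ //.
case: ifP => _.
  case: (eqVneq b ord0) => [eb|]; last by rewrite ler0n.
  by move: hab; have := prof0 i b; rewrite eb eqxx => /eqP ->.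
case: (boolP ((b == ord0) || (b == hh i))) => hb; last by rewrite mul0r divr_ge0.
have hpb : (prof i b <= 1)%N.
  case/orP: hb => /eqP ->; last by rewrite prof_hh.
  by have := prof0 i ord0; rewrite eqxx => /eqP ->.
have : (prof i a : nat) == 0%N by apply/eqP; lia.
by rewrite prof0 => ->.
Qed.

Lemma sum_ind_nat (a : 'I_n) : (\sum_(j < n) (j == a : nat) = 1)%N.
Proof.
rewrite (bigD1 a) //= eqxx big1 ?addn0 // => j /negbTE -> //.
Qed.

Lemma SW_Y (Y : matching n) : SW Y (vY Y) = n%:R^-1.
Proof.
rewrite /SW.
have pw : forall i, vY Y i (Y i) = ((Y i == ord0)%:R) * n%:R^-1.
  move=> i; rewrite /vY; case: (eqVneq (Y i) ord0) => e1; first by rewrite mul1r.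
  rewrite mul0r; case: (eqVneq (Y i) (hh i)) => e2.
    by [].
  by rewrite mul0r.
under eq_bigr => i _ do rewrite pw.
rewrite -mulr_suml.
have e : \sum_(i < n) ((Y i == ord0)%:R : R) = \sum_(j < n) (j == ord0)%:R
  := esym (reindex_inj (F := fun j => ((j == ord0)%:R : R)) (@perm_inj _ Y)).
by rewrite e sum_ind mul1r.
Qed.

Definition Bb (Y : matching n) (i : 'I_n) : bool :=
  [&& (0 < i)%N, (i < m.+1)%N, Y i != ord0 & Y i != hh i].
Definition Cb (Y : matching n) (i : 'I_n) : bool :=
  [&& (0 < i)%N, (i < m.+1)%N & Y i == hh i].

Lemma pw_nat Y i : (1 <= Bb Y i + (Y i == ord0) + Cb Y i + ((i : nat) == 0%N)
   + ((i : nat) == m.+1))%N.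
Proof.
rewrite /Bb /Cb; have := ltn_ord i.
case: (Y i == ord0); case: (Y i == hh i) => /=;
case: (ltnP 0 i) => /= h1; case: (ltnP i m.+1) => /= h2 h3;
  rewrite ?addn0 ?add0n //; try lia.
Qed.

Lemma cnt K k : (2 * \sum_(j < k) (2 * j < K : nat) <= K.+1)%N.
Proof.
elim: k => [|k IH]; first by rewrite big_ord0.
rewrite big_ord_recr /=.
have : (\sum_(i < k) (2 * widen_ord (leqnSn k) i < K : nat) <= k)%N.
  rewrite -[X in (_ <= X)%N]card_ord -sum1_card; apply: leq_sum => j _; by case: (_ < _)%N.
move: IH; case: (ltnP (2 * k) K) => /= h *; lia.
Qed.

Lemma sumC Y : (2 * \sum_(i < n) (Cb Y i : nat) <= n.+1)%N.
Proof.
rewrite (reindex_inj (h := (Y^-1)%g) (@perm_inj _ (Y^-1)%g)) /=.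
apply: leq_trans (cnt n n); rewrite leq_mul2l /=; apply: leq_sum => j _.
rewrite /Cb permKV; case: (ltnP 0 _) => //= h1; case: (ltnP _ m.+1) => //= h2.
case: eqP => //= ->; rewrite hh_val /h_nat /s_nat.
rewrite lt0b; move: h1 h2; set k := nat_of_ord _ => h1 h2; case: (leqP k (m.+1 - k)) => h3; case: ifP => h4; lia.
Qed.

Lemma sumB Y : (2 * n <= 4 * \sum_(i < n) (Bb Y i : nat) + 14)%N.
Proof.
have h := sumC Y.
have e1 : (\sum_(i < n) ((Y i == ord0) : nat) = 1)%N.
  have e : (\sum_(i < n) ((Y i == ord0) : nat) = \sum_(j < n) (j == ord0 : nat))%N
    := esym (reindex_inj (F := fun j => (j == ord0 : nat)) (@perm_inj _ Y)).
  by rewrite e sum_ind_nat.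
have e2 : (\sum_(i < n) (((i : nat) == 0%N) : nat) = 1)%N.
  rewrite -(sum_ind_nat ord0); apply: eq_bigr => i _; by rewrite -val_eqE.
have e3 : (\sum_(i < n) (((i : nat) == m.+1) : nat) = 1)%N.
  rewrite -(sum_ind_nat ord_max); apply: eq_bigr => i _; by rewrite -val_eqE.
have : (\sum_(i < n) 1 <= \sum_(i < n) (Bb Y i + (Y i == ord0) + Cb Y i
   + ((i : nat) == 0%N) + ((i : nat) == m.+1)))%N.
  by apply: leq_sum => i _; apply: pw_nat.
rewrite !big_split /= e1 e2 e3 sum1_card card_ord; move: h; set b := (\sum_(i < n) Bb Y i)%N; set c := (\sum_(i < n) Cb Y i)%N; lia.
Qed.

Lemma opt_ge' (v : valuation R n) (Z : matching n) : SW Z v <= opt_SW v.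
Proof. rewrite /opt_SW; exact: (le_bigmax (0:R) (fun Y => SW Y v) Z). Qed.

Lemma pw_real Y i : ((Bb Y i)%:R / 2 : R) <= vY Y i i + vY Y i (rev_ord i).
Proof.
have [v0 _] := vY_unit Y.
case hB : (Bb Y i); last by rewrite mul0r addr_ge0.
move: hB; rewrite /Bb => /and4P [h1 h2 h3 h4].
have hv : vY Y i (hh i) = 1 / 2.
  by rewrite /vY (negbTE h3) (negbTE h4) eqxx orbT.
have hx : hh i = i \/ hh i = rev_ord i.
  have e := hh_val i; move: e; rewrite /h_nat /s_nat.
  case: (leqP (nat_of_ord i) (m.+1 - i)) => h5 /=.
    by rewrite ifT; [move=> e; left; apply: val_inj | lia].
  by rewrite ifT; [move=> e; right; apply: val_inj; change (nat_of_ord (hh i) = nat_of_ord (rev_ord i)); rewrite e /=; lia | lia].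
have key : vY Y i (hh i) <= vY Y i i + vY Y i (rev_ord i).
  by case: hx => ->; [rewrite lerDl | rewrite lerDr].
by apply: le_trans key; rewrite hv.
Qed.

Lemma opt_lb Y : ((\sum_(i < n) Bb Y i)%N%:R / 4 : R) <= opt_SW (vY Y).
Proof.
have h1 := opt_ge' (vY Y) (1%g : matching n).
have h2 := opt_ge' (vY Y) revp.
have h3 : ((\sum_(i < n) Bb Y i)%N%:R / 2 : R) <= SW (1%g : matching n) (vY Y) + SW revp (vY Y).
  rewrite /SW -big_split /= natr_sum mulr_suml; apply: ler_sum => i _.
  by rewrite perm1 /revp permE; apply: pw_real.
lra.
Qed.

Lemma part2_n (A : ordinal_algorithm n) (d : R) :
  (15 <= n)%N -> d < 1/16 * (n ^ 2)%N%:R -> ~ distortion_le A d.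
Proof.
move=> hn hd hD.
set Y := A prof.
have := hD (vY Y) prof (vY_unit Y) (vY_cons Y).
rewrite SW_Y => hle.
have hl := opt_lb Y.
have hb := sumB Y.
have hb' : (2 * n%:R : R) <= 4 * (\sum_(i < n) Bb Y i)%N%:R + 14.
  by rewrite -(natrM _ 4) -natrD -(natrM _ 2) ler_nat.
have h14 : (15 : R) <= n%:R by rewrite (ler_nat R 15).
move: hd hle hl hb' h14; rewrite natrX.
set x := (n%:R : R); set b := ((\sum_(i < n) Bb Y i)%N%:R : R).
set o := opt_SW (vY Y) => hd hle hl hb' h14.
have hx : 0 < x by lra.
have hxi : x * x^-1 = 1 by rewrite mulfV // gt_eqF.
have hxi0 : 0 < x^-1 by rewrite invr_gt0.
have : d * x^-1 < 1/16 * x^+2 * x^-1 by rewrite ltr_pM2r.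
have -> : 1/16 * x^+2 * x^-1 = x / 16.
  by rewrite expr2 -!mulrA hxi mulr1 mul1r mulrC.
move=> hy; clear hd hxi hxi0 hD; clearbody x b o; lra.
Qed.

End P2.

Theorem theorem1 (R : realFieldType) :
  (* (i) upper bound n^2 for algorithms matching someone to her top item *)
  (forall (n : nat) (A : ordinal_algorithm n),
      matches_some_top A -> distortion_le A ((n ^ 2)%N%:R : R)) /\
  (* (ii) every deterministic ordinal algorithm has distortion Omega(n^2):
     the distortion is >= c n^2, i.e. no bound d < c n^2 holds *)
  (exists (c : R) (N : nat), 0 < c /\
     forall (n : nat), (N <= n)%N ->
       forall (A : ordinal_algorithm n) (d : R),
         d < c * (n ^ 2)%N%:R -> ~ distortion_le A d).
Proof.
split; first by move=> n A; apply: part1.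
exists (1/16), 15%N; split; first by lra.
case=> [|[|m]] // hn A d hd.
exact: (part2_n hn hd).
Qed.
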